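(* Let $\vec a\in\mathbb R^4\setminus\{0\}$, let $V\in\mathfrak X(\mathbb S^3)$ be the proper conformal vector field $V(p)=\vec a-\langle\vec a,p\rangle p$, let $q\neq0$, and let $\gamma\colon I\to\mathbb S^3$ be a curve parametrized by arc-length which is a conformal trajectory of $V$. Then there exist $a_1,a_2\in\mathbb R$ such that $$\langle\gamma(s),\vec a\rangle=a_1\cos s+a_2\sin s\quad\text{for all }s\in I.$$ If $\gamma$ is a geodesic, then $\gamma(s)=\cos(s)\,\vec v+\sin(s)\,\vec w$ for orthonormal vectors $\vec v,\vec w\in\mathbb R^4$ with $\vec a\in\operatorname{span}\{\vec v,\vec w\}$; that is, $\gamma$ is (an arc of) the great circle obtained by intersecting $\mathbb S^3$ with a $2$-plane through the origin containing $\vec a$. If $\gamma$ is not a geodesic, then its curvature is constant, $\kappa=|q|\sqrt{|\vec a|^2-(a_1^2+a_2^2)}$, and its torsion is $\tau(s)=-q\,(a_1\sin s-a_2\cos s)$.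
   Context: $\mathbb S^3=\{p\in\mathbb R^4:|p|=1\}$ with the metric induced by the Euclidean inner product $\langle\cdot,\cdot\rangle$ of $\mathbb R^4$; its Levi-Civita connection is $\nabla$, so for a unit-speed curve $\nabla_{\gamma'}\gamma'=\gamma''+\gamma$. The cross product of $u,v\in T_p\mathbb S^3$ is the unique $u\times v\in T_p\mathbb S^3$ with $\langle u\times v,w\rangle=\det(u,v,w,p)$ for all $w\in T_p\mathbb S^3$. For a fixed real $q\neq0$, a conformal trajectory of $V$ is a regular curve with $\nabla_{\gamma'}\gamma'=q\,V\times\gamma'$. Frenet frame of a non-geodesic unit-speed curve: $T=\gamma'$, $\nabla_TT=\kappa N$ with $\kappa>0$, $B=T\times N$, $\nabla_TN=-\kappa T+\tau B$, $\nabla_TB=-\tau N$; $\kappa$ is the curvature, $\tau$ the torsion. *)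

(* Defs.v *)
From HB Require Import structures.
From mathcomp Require Import all_boot all_order all_algebra.
From mathcomp Require Import all_classical all_reals all_analysis.
Set Implicit Arguments. Unset Strict Implicit. Unset Printing Implicit Defensive.
Import Order.TTheory GRing.Theory Num.Theory.
Import numFieldNormedType.Exports.
Local Open Scope ring_scope.
Local Open Scope classical_set_scope.

Section S3.
Variable R : realType.

Definition dot4 (u v : 'rV[R]_4) : R := \sum_(i < 4) u 0 i * v 0 i.

Definition norm4 (u : 'rV[R]_4) : R := Num.sqrt (dot4 u u).

Definition mat4 (u v w p : 'rV[R]_4) : 'M[R]_4 :=
  \matrix_(i < 4, j < 4) (nth 0 [:: u; v; w; p] i) 0 j.

(* cross product in T_p S^3: the vector whose k-th coordinate is
   det(u, v, e_k, p); equivalently the unique x with <x,p> = 0 and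
   <x, w> = det(u, v, w, p) for all w (by multilinearity of det). *)
Definition cross (p u v : 'rV[R]_4) : 'rV[R]_4 :=
  \row_(k < 4) \det (mat4 u v (delta_mx 0 k) p).

(* Levi-Civita covariant derivative of a vector field Y along the curve gam
   in S^3: tangential projection of the ambient derivative. *)
Definition covD (gam Y : R -> 'rV[R]_4) (s : R) : 'rV[R]_4 :=
  derive1 Y s - dot4 (derive1 Y s) (gam s) *: gam s.

Definition tangent (gam : R -> 'rV[R]_4) : R -> 'rV[R]_4 := derive1 gam.
Definition curvature (gam : R -> 'rV[R]_4) (s : R) : R :=
  norm4 (covD gam (tangent gam) s).
Definition normal (gam : R -> 'rV[R]_4) (s : R) : 'rV[R]_4 :=
  (curvature gam s)^-1 *: covD gam (tangent gam) s.
Definition binormal (gam : R -> 'rV[R]_4) (s : R) : 'rV[R]_4 :=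
  cross (gam s) (tangent gam s) (normal gam s).
Definition torsion (gam : R -> 'rV[R]_4) (s : R) : R :=
  dot4 (covD gam (normal gam) s) (binormal gam s).

Definition confV (a p : 'rV[R]_4) : 'rV[R]_4 := a - dot4 a p *: p.

End S3.

(* Main.v *)
Require Import Defs.
From HB Require Import structures.
From mathcomp Require Import all_boot all_order all_algebra.
From mathcomp Require Import all_classical all_reals all_analysis.
From mathcomp Require Import ring lra.
Import Order.TTheory GRing.Theory Num.Theory.
Import numFieldNormedType.Exports.
Local Open Scope ring_scope.
Local Open Scope classical_set_scope.
Section D.
Variable R : comPzRingType.
Variable a : nat -> nat -> R.
Definition d2 (r0 r1 c0 c1 : nat) := a r0 c0 * a r1 c1 - a r0 c1 * a r1 c0.
Definition d3 (r0 r1 r2 c0 c1 c2 : nat) :=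
  a r0 c0 * d2 r1 r2 c1 c2 - a r0 c1 * d2 r1 r2 c0 c2 + a r0 c2 * d2 r1 r2 c0 c1.
Definition d4 := a 0 0 * d3 1 2 3 1 2 3 - a 0 1 * d3 1 2 3 0 2 3
  + a 0 2 * d3 1 2 3 0 1 3 - a 0 3 * d3 1 2 3 0 1 2.
Lemma det4 : \det (\matrix_(i < 4, j < 4) a i j) = d4.
Proof.
do 3 (rewrite ?det_mx11; rewrite !(expand_det_row _ 0) !big_ord_recl !big_ord0 /cofactor).
rewrite !det_mx11 !mxE /d4 /d3 /d2 /bump /=.
ring.
Qed.
End D.

Arguments d2 {R}.
Arguments d3 {R}.
Arguments d4 {R}.

Section Alg.
Variable R : realType.
Implicit Types u v w p x : 'rV[R]_4.

Lemma sum4 (F : 'I_4 -> R) :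
  \sum_(i < 4) F i = F (inord 0) + F (inord 1) + F (inord 2) + F (inord 3).
Proof.
rewrite !big_ord_recl big_ord0 addr0 !addrA.
by congr (_ + _ + _ + _); congr F; apply: val_inj; rewrite /= inordK.
Qed.

Lemma dot4E u v : dot4 u v = u 0 (inord 0) * v 0 (inord 0) + u 0 (inord 1) * v 0 (inord 1)
  + u 0 (inord 2) * v 0 (inord 2) + u 0 (inord 3) * v 0 (inord 3).
Proof. by rewrite /dot4 sum4. Qed.

Lemma inord_eq4 (i j : nat) : (i < 4)%N -> (j < 4)%N ->
  (inord i == inord j :> 'I_4) = (i == j).
Proof.
move=> hi hj; apply/eqP/eqP => [h|->//].
by rewrite -(inordK hi) -(inordK hj) h.
Qed.

Lemma mat4E u v w p : mat4 u v w p =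
  \matrix_(i < 4, j < 4) (nth 0 [:: u; v; w; p] i) 0 (inord j).
Proof. by apply/matrixP => i j; rewrite !mxE inord_val. Qed.

Lemma det4E u v w p : \det (mat4 u v w p) =
  d4 (fun i j => (nth 0 [:: u; v; w; p] i) 0 (inord j)).
Proof. by rewrite mat4E (@det4 _ (fun i j => (nth 0 [:: u; v; w; p] i) 0 (inord j))). Qed.

Lemma crossE p u v k : (k < 4)%N -> (cross p u v) 0 (inord k) =
  \det (mat4 u v (delta_mx 0 (inord k)) p).
Proof. by move=> hk; rewrite mxE. Qed.

Lemma crossdot p u v x : dot4 (cross p u v) x = \det (mat4 u v x p).
Proof.
rewrite dot4E !crossE // !det4E /d4 /d3 /d2 /= !mxE !inord_eq4 //=.
ring.
Qed.

End Alg.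
Section Alg2.
Variable R : realType.
Implicit Types u v w p x : 'rV[R]_4.

Lemma lagrange4 p u v : dot4 (cross p u v) (cross p u v) =
  dot4 u u * dot4 v v * dot4 p p + 2 * dot4 u v * dot4 v p * dot4 p u
  - dot4 u u * dot4 v p ^+ 2 - dot4 v v * dot4 p u ^+ 2 - dot4 p p * dot4 u v ^+ 2.
Proof.
rewrite crossdot det4E /d4 /d3 /d2 /= !crossE // !det4E /d4 /d3 /d2 /= !mxE !inord_eq4 //=.
rewrite !dot4E.
ring.
Qed.

Lemma gram4 u v w p : \det (mat4 u v w p) ^+ 2 =
  d4 (fun i j => dot4 (nth 0 [:: u; v; w; p] i) (nth 0 [:: u; v; w; p] j)).
Proof.
rewrite expr2 -{2}det_tr -det_mulmx.
rewrite -(@det4 _ (fun i j => dot4 (nth 0 [:: u; v; w; p] i) (nth 0 [:: u; v; w; p] j))).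
congr (\det _); apply/matrixP => i j; rewrite !mxE /dot4.
by apply: eq_bigr => k _; rewrite !mxE.
Qed.
End Alg2.


Section An.
Variable R : realType.
Implicit Types u v w p : 'rV[R]_4.

Lemma dot4C u v : dot4 u v = dot4 v u.
Proof. by rewrite !dot4E; ring. Qed.
Lemma dot4Dl u v w : dot4 (u + v) w = dot4 u w + dot4 v w.
Proof. by rewrite !dot4E !mxE; ring. Qed.
Lemma dot4Bl u v w : dot4 (u - v) w = dot4 u w - dot4 v w.
Proof. by rewrite !dot4E !mxE; ring. Qed.
Lemma dot4Zl (c : R) u w : dot4 (c *: u) w = c * dot4 u w.
Proof. by rewrite !dot4E !mxE; ring. Qed.
Lemma dot4Dr u v w : dot4 w (u + v) = dot4 w u + dot4 w v.
Proof. by rewrite !dot4E !mxE; ring. Qed.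
Lemma dot4Br u v w : dot4 w (u - v) = dot4 w u - dot4 w v.
Proof. by rewrite !dot4E !mxE; ring. Qed.
Lemma dot4Zr (c : R) u w : dot4 w (c *: u) = c * dot4 w u.
Proof. by rewrite !dot4E !mxE; ring. Qed.
Lemma dot4Nl u w : dot4 (- u) w = - dot4 u w.
Proof. by rewrite !dot4E !mxE; ring. Qed.
Lemma dot4Nr u w : dot4 w (- u) = - dot4 w u.
Proof. by rewrite !dot4E !mxE; ring. Qed.
Lemma dot40l u : dot4 0 u = 0.
Proof. by rewrite !dot4E !mxE; ring. Qed.
Lemma dot40r u : dot4 u 0 = 0.
Proof. by rewrite !dot4E !mxE; ring. Qed.

Lemma dot4_ge0 u : 0 <= dot4 u u.
Proof. rewrite dot4E; nra. Qed.

Lemma vec4P u v : (forall k, (k < 4)%N -> u 0 (inord k) = v 0 (inord k)) -> u = v.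
Proof.
move=> h; apply/rowP => j; rewrite -(inord_val j); exact/h/ltn_ord.
Qed.

Lemma dot4_eq0 u : dot4 u u = 0 -> u = 0.
Proof.
rewrite dot4E => h; apply: vec4P => k hk; rewrite mxE.
by case: k hk => [|[|[|[|k]]]] // _; nra.
Qed.

Lemma coord_derivable (f : R -> 'rV[R]_4) s k :
  derivable f s 1 -> derivable (fun x => f x 0 k) s 1.
Proof. by move=> /derivable_mxP; apply. Qed.

Lemma coord_derive (f : R -> 'rV[R]_4) s k :
  derivable f s 1 -> 'D_1 (fun x => f x 0 k) s = ('D_1 f s) 0 k.
Proof. by move=> df; rewrite derive_mx // mxE. Qed.

Lemma coord_is_derive (f : R -> 'rV[R]_4) s k :
  derivable f s 1 -> is_derive s 1 (fun x => f x 0 k) ((derive1 f s) 0 k).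
Proof.
move=> df; rewrite derive1E -coord_derive //.
exact/derivableP/coord_derivable.
Qed.

Lemma dot4_is_derive (f g : R -> 'rV[R]_4) s :
  derivable f s 1 -> derivable g s 1 ->
  is_derive s 1 (fun x => dot4 (f x) (g x))
    (dot4 (derive1 f s) (g s) + dot4 (f s) (derive1 g s)).
Proof.
move=> df dg.
have -> : (fun x => dot4 (f x) (g x)) =
    \sum_(i < 4) ((fun x => f x 0 i) * (fun x => g x 0 i)).
  by rewrite fct_sumE; apply/funext => x; rewrite /dot4.
apply: is_derive_eq.
  apply: is_derive_sum => i; apply: is_deriveM; exact: coord_is_derive.
rewrite /dot4 -big_split /=; apply: eq_bigr => i _.
rewrite addrC; congr (_ + _); exact: mulrC.
Qed.

Lemma deriv_on_const (I : set R) (h : R -> R) c s d :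
  open I -> I s -> (forall x, I x -> h x = c) -> is_derive s 1 h d -> d = 0.
Proof.
move=> oI Is hc [_ <-].
have nI : nbhs s I by exact: oI.
rewrite (@near_eq_derive _ _ _ h (cst c)) ?derive_cst //.
by apply: filterS nI => x /hc.
Qed.

Lemma ode_zero (I : set R) (phi psi : R -> R) s0 :
  is_interval I -> I s0 ->
  (forall s, I s -> is_derive s 1 phi (psi s)) ->
  (forall s, I s -> is_derive s 1 psi (- phi s)) ->
  phi s0 = 0 -> psi s0 = 0 -> forall s, I s -> phi s = 0.
Proof.
move=> iI Is0 dphi dpsi p0 q0.
pose h := (phi ^+ 2 + psi ^+ 2 : R -> R).
have hE : forall x, h x = phi x ^+ 2 + psi x ^+ 2 by move=> x; rewrite /h /= !exprfctE.
have dh : forall s, I s -> is_derive s 1 h 0.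
  move=> s Is; have := dphi s Is; have := dpsi s Is => d2 d1.
  apply: is_derive_eq.
  rewrite /GRing.scale /=; ring.
have hc : forall a b, I a -> I b -> a <= b -> h a = h b.
  move=> a b Ia Ib ab.
  have sub : forall x, x \in `[a, b]%R -> I x.
    move=> x; rewrite in_itv /= => /andP[ax xb]; apply: (iI a b) => //.
    by rewrite ax xb.
  have ch : {within `[a, b], continuous h}.
    apply: derivable_within_continuous => x /sub Ix.
    by have [] := dh x Ix.
  have [c _ ] := @MVT_segment R h (fun _ => 0) a b ab
    (fun x hx => dh x (sub x (subset_itv_oo_cc hx))) ch.
  by rewrite mul0r => /eqP; rewrite subr_eq0 => /eqP.
move=> s Is.
have : h s = 0.
  case: (leP s0 s) => hs.
    by rewrite -(hc _ _ Is0 Is hs) !hE p0 q0 expr2 mulr0 addr0.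
  by rewrite (hc _ _ Is Is0 (ltW hs)) !hE p0 q0 expr2 mulr0 addr0.
rewrite hE => H; nra.
Qed.
End An.
Arguments deriv_on_const {R I h c s d}.
Arguments ode_zero {R I phi psi s0}.
Arguments dot4_is_derive {R f g s}.


Section Alg3.
Variable R : realType.
Implicit Types u v w p g t a Ag Nd : 'rV[R]_4.

Lemma det_cyc u v w p : \det (mat4 u v w p) = \det (mat4 v w u p).
Proof. rewrite !det4E /d4 /d3 /d2 /=; ring. Qed.
Lemma det_rep13 u v p : \det (mat4 u v u p) = 0.
Proof. rewrite !det4E /d4 /d3 /d2 /=; ring. Qed.
Lemma det_rep34 u v p : \det (mat4 u v p p) = 0.
Proof. rewrite !det4E /d4 /d3 /d2 /=; ring. Qed.

Ltac bil := rewrite ?(dot4Dl R, dot4Bl R, dot4Zl R, dot4Dr R, dot4Br R, dot4Zr R, dot4Nl R, dot4Nr R).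

Lemma curv_alg g t a : dot4 g g = 1 -> dot4 t t = 1 -> dot4 g t = 0 ->
  dot4 (cross g (confV a g) t) (cross g (confV a g) t) =
  dot4 a a - dot4 g a ^+ 2 - dot4 t a ^+ 2.
Proof.
move=> gg tt gt; have tg : dot4 t g = 0 by rewrite dot4C.
rewrite lagrange4 /confV; bil.
rewrite ?gg ?tt ?gt ?tg [dot4 a g]dot4C [dot4 a t]dot4C. ring.
Qed.

Lemma span_alg g t a : dot4 g g = 1 -> dot4 t t = 1 -> dot4 g t = 0 ->
  cross g (confV a g) t = 0 -> a = dot4 g a *: g + dot4 t a *: t.
Proof.
move=> gg tt gt C0; have tg : dot4 t g = 0 by rewrite dot4C.
have := @curv_alg g t a gg tt gt; rewrite C0 dot40l => L.
apply/eqP; rewrite -subr_eq0; apply/eqP/dot4_eq0.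
bil; rewrite gg tt gt tg [dot4 a g]dot4C [dot4 a t]dot4C.
move: L; set x := dot4 a a; set y := dot4 g a; set z := dot4 t a => L.
have -> : x = y ^+ 2 + z ^+ 2 by lra.
ring.
Qed.

Lemma torsion_alg g t Ag Nd a (q K psi : R) :
  q != 0 -> K != 0 ->
  dot4 g g = 1 -> dot4 t t = 1 -> dot4 g t = 0 ->
  dot4 Ag g = 0 -> dot4 Ag t = 0 -> dot4 Ag Ag = K ^+ 2 ->
  Ag = q *: cross g (confV a g) t ->
  dot4 Nd g = 0 -> dot4 Nd Ag = 0 -> dot4 Nd t = - K ^+ 2 -> dot4 Nd a = 0 ->
  dot4 t a = psi ->
  dot4 (K^-1 *: Nd - dot4 (K^-1 *: Nd) g *: g) (cross g t (K^-1 *: Ag)) = q * psi.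
Proof.
move=> q0 K0 gg tt gt Agg Agt AgAg AgE Ndg NdAg Ndt Nda ta.
set n := K^-1 *: Ag; set N' := K^-1 *: Nd.
have tg : dot4 t g = 0 by rewrite dot4C.
have nn : dot4 n n = 1.
  rewrite /n dot4Zl dot4Zr AgAg; field; exact: K0.
have nt : dot4 n t = 0 by rewrite /n dot4Zl Agt mulr0.
have tn : dot4 t n = 0 by rewrite dot4C.
have ng : dot4 n g = 0 by rewrite /n dot4Zl Agg mulr0.
have gn : dot4 g n = 0 by rewrite dot4C.
pose W := N' + K *: t.
have Wg : dot4 W g = 0 by rewrite /W /N'; bil; rewrite Ndg tg; ring.
have gW : dot4 g W = 0 by rewrite dot4C.
have Wt : dot4 W t = 0 by rewrite /W /N'; bil; rewrite Ndt tt; field; exact: K0.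
have tW : dot4 t W = 0 by rewrite dot4C.
have Wn : dot4 W n = 0.
  rewrite /W /N' /n; bil; rewrite NdAg [dot4 t Ag]dot4C Agt; ring.
have nW : dot4 n W = 0 by rewrite dot4C.
have WV : dot4 W (confV a g) = K * psi.
  rewrite /W /N' /confV; bil.
  rewrite Nda Ndg ta tg; ring.
have hW : N' = W - K *: t by rewrite /W addrK.
clearbody W.
set B := cross g t n.
have BB : dot4 B B = 1.
  rewrite /B lagrange4 tt nn gg tn ng gt; ring.
set tau := \det (mat4 t n W g).
have WB : dot4 W B = tau by rewrite dot4C /B crossdot.
have G : tau ^+ 2 = dot4 W W.
  rewrite /tau gram4 /d4 /d3 /d2 /=.
  rewrite tt nn gg tn nt tW Wt tg gt nW Wn ng gn Wg gW; ring.
have WtB : W = tau *: B.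
  apply/eqP; rewrite -subr_eq0; apply/eqP/dot4_eq0.
  bil; rewrite [dot4 B W]dot4C WB BB -G; ring.
have BV : q * dot4 B (confV a g) = K.
  have : dot4 Ag n = K.
    rewrite /n dot4Zr AgAg; field; exact: K0.
  rewrite {1}AgE dot4Zl crossdot det_cyc -crossdot.
  by rewrite /B.
have tauE : tau = q * psi.
  move: WV; rewrite WtB dot4Zl => h.
  have : tau * K = q * psi * K by rewrite -{1}BV mulrCA h; ring.
  by move/(mulIf K0).
rewrite hW.
bil; rewrite WB tauE.
have tB : dot4 t B = 0 by rewrite dot4C /B crossdot det_rep13.
have gB : dot4 g B = 0 by rewrite dot4C /B crossdot det_rep34.
rewrite tB gB Wg tg; ring.
Qed.

End Alg3.


Section Ode.
Variable R : realType.

Lemma ode_sol (I : set R) (f g : R -> R) s0 :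
  is_interval I -> I s0 ->
  (forall s, I s -> is_derive s 1 f (g s)) ->
  (forall s, I s -> is_derive s 1 g (- f s)) ->
  forall s, I s ->
    f s = (f s0 * cos s0 - g s0 * sin s0) * cos s + (f s0 * sin s0 + g s0 * cos s0) * sin s /\
    g s = - (f s0 * cos s0 - g s0 * sin s0) * sin s + (f s0 * sin s0 + g s0 * cos s0) * cos s.
Proof.
move=> iI Is0 df dg.
set a1 := f s0 * cos s0 - g s0 * sin s0.
set a2 := f s0 * sin s0 + g s0 * cos s0.
have e := cos2Dsin2 s0.
have dphi : forall s, I s -> is_derive s 1 (fun x => f x - (a1 * cos x + a2 * sin x))
   (g s - (- a1 * sin s + a2 * cos s)).
  move=> s Is.
  have H : is_derive s 1 (f - (a1 \*: (@cos R) + a2 \*: (@sin R)))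
     (g s - (a1 *: - sin s + a2 *: cos s)).
    by apply: is_deriveB; exact: df.
  rewrite (_ : (fun x => _) = f - (a1 \*: (@cos R) + a2 \*: (@sin R))); last by apply/funext.
  apply: is_derive_eq H _; rewrite /GRing.scale /=; ring.
have dpsi : forall s, I s -> is_derive s 1 (fun x => g x - (- a1 * sin x + a2 * cos x))
   (- (f s - (a1 * cos s + a2 * sin s))).
  move=> s Is.
  have H : is_derive s 1 (g - (- a1 \*: (@sin R) + a2 \*: (@cos R)))
     (- f s - (- a1 *: cos s + a2 *: - sin s)).
    by apply: is_deriveB; exact: dg.
  rewrite (_ : (fun x => _) = g - (- a1 \*: (@sin R) + a2 \*: (@cos R))); last by apply/funext.
  apply: is_derive_eq H _; rewrite /GRing.scale /=; ring.
have p0 : f s0 - (a1 * cos s0 + a2 * sin s0) = 0.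
  have -> : f s0 - (a1 * cos s0 + a2 * sin s0) =
    f s0 * (1 - (cos s0 ^+ 2 + sin s0 ^+ 2)) by rewrite /a1 /a2; ring.
  by rewrite e subrr mulr0.
have q0 : g s0 - (- a1 * sin s0 + a2 * cos s0) = 0.
  have -> : g s0 - (- a1 * sin s0 + a2 * cos s0) =
    g s0 * (1 - (cos s0 ^+ 2 + sin s0 ^+ 2)) by rewrite /a1 /a2; ring.
  by rewrite e subrr mulr0.
move=> s Is.
have h1 := ode_zero iI Is0 dphi dpsi p0 q0 s Is.
split; first by apply/eqP; rewrite -subr_eq0; apply/eqP.
have dmphi : forall s, I s -> is_derive s 1 (fun x => - (f x - (a1 * cos x + a2 * sin x)))
   (- (g s - (- a1 * sin s + a2 * cos s))).
  move=> x Ix; have H := is_deriveN (dphi x Ix); exact: H.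
have q0' : - (f s0 - (a1 * cos s0 + a2 * sin s0)) = 0 by rewrite p0 oppr0.
have := ode_zero iI Is0 dpsi dmphi q0 q0' s Is.
by move/eqP; rewrite subr_eq0 => /eqP.
Qed.
Lemma sq_id (A a1 a2 c s : R) : c ^+ 2 + s ^+ 2 = 1 ->
  A - (a1 * c + a2 * s) ^+ 2 - (- a1 * s + a2 * c) ^+ 2 = A - (a1 ^+ 2 + a2 ^+ 2).
Proof.
move=> e; transitivity (A - (a1 ^+ 2 + a2 ^+ 2) * (c ^+ 2 + s ^+ 2)); first ring.
by rewrite e mulr1.
Qed.
End Ode.


Theorem theorem2 (R : realType) (a : 'rV[R]_4) (q : R)
    (I : set R) (gam : R -> 'rV[R]_4) :
  a != 0 -> q != 0 ->
  is_interval I -> open I -> I !=set0 ->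
  (forall (n : nat) (s : R), I s -> derivable (iter n (@derive1 R _) gam) s 1) ->
  (forall s, I s -> dot4 (gam s) (gam s) = 1) ->
  (forall s, I s -> dot4 (derive1 gam s) (derive1 gam s) = 1) ->
  (forall s, I s ->
     covD gam (tangent gam) s = q *: cross (gam s) (confV a (gam s)) (derive1 gam s)) ->
  exists a1 a2 : R,
    (forall s, I s -> dot4 (gam s) a = a1 * cos s + a2 * sin s) /\
    ((forall s, I s -> covD gam (tangent gam) s = 0) ->
       exists v w : 'rV[R]_4,
         [/\ dot4 v v = 1, dot4 w w = 1, dot4 v w = 0,
             (exists c1 c2 : R, a = c1 *: v + c2 *: w) &
             forall s, I s -> gam s = cos s *: v + sin s *: w]) /\
    ((exists s, I s /\ covD gam (tangent gam) s != 0) ->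
       forall s, I s ->
         curvature gam s = `|q| * Num.sqrt (dot4 a a - (a1 ^+ 2 + a2 ^+ 2)) /\
         torsion gam s = - q * (a1 * sin s - a2 * cos s)).
Proof.
move=> a0 q0 iI oI [s0 Is0] smooth sph unit traj.
have dg : forall s, I s -> derivable gam s 1 := fun s Is => smooth 0%N s Is.
have dT : forall s, I s -> derivable (derive1 gam) s 1 := fun s Is => smooth 1%N s Is.
have dA : forall s, I s -> derivable (derive1 (derive1 gam)) s 1 :=
  fun s Is => smooth 2%N s Is.
have F1 : forall s, I s -> dot4 (gam s) (derive1 gam s) = 0.
  move=> s Is; have := deriv_on_const oI Is sph (dot4_is_derive (dg s Is) (dg s Is)).
  rewrite [dot4 (derive1 gam s) _]dot4C => h; lra.
have F2 : forall s, I s -> dot4 (derive1 gam s) (derive1 (derive1 gam) s) = 0.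
  move=> s Is; have := deriv_on_const oI Is unit (dot4_is_derive (dT s Is) (dT s Is)).
  rewrite [dot4 (derive1 (derive1 gam) s) _]dot4C => h; lra.
have F3 : forall s, I s -> dot4 (gam s) (derive1 (derive1 gam) s) = -1.
  move=> s Is; have := deriv_on_const oI Is F1 (dot4_is_derive (dg s Is) (dT s Is)).
  rewrite unit // => h; lra.
have covE : forall s, I s -> covD gam (tangent gam) s = derive1 (derive1 gam) s + gam s.
  by move=> s Is; rewrite /covD /tangent dot4C F3 // scaleN1r opprK.
have trajE : forall s, I s -> derive1 (derive1 gam) s + gam s =
    q *: cross (gam s) (confV a (gam s)) (derive1 gam s).
  by move=> s Is; rewrite -covE // traj.
have F4 : forall s, I s -> dot4 (derive1 (derive1 gam) s + gam s) a = 0.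
  move=> s Is; rewrite trajE // dot4Zl crossdot /confV det4E /d4 /d3 /d2 /= !mxE; ring.
pose f := fun x => dot4 (gam x) a.
pose psi := fun x => dot4 (derive1 gam x) a.
have df : forall s, I s -> is_derive s 1 f (psi s).
  move=> s Is; have := @dot4_is_derive R gam (cst a) s (dg s Is) (derivable_cst a s 1).
  by rewrite derive1_cst dot40r addr0.
have dpsi : forall s, I s -> is_derive s 1 psi (- f s).
  move=> s Is.
  have := @dot4_is_derive R (derive1 gam) (cst a) s (dT s Is) (derivable_cst a s 1).
  rewrite derive1_cst dot40r addr0 => H; apply: is_derive_eq H _.
  by have := F4 s Is; rewrite dot4Dl /f => h; lra.
have sol := @ode_sol R I f psi s0 iI Is0 df dpsi.
exists (f s0 * cos s0 - psi s0 * sin s0), (f s0 * sin s0 + psi s0 * cos s0).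
split; first by move=> s Is; have [h _] := sol s Is.
have e0 := cos2Dsin2 s0.
split.
  move=> G.
  have AG : forall s, I s -> derive1 (derive1 gam) s = - gam s.
    move=> s Is; apply/eqP; rewrite -subr_eq0 opprK -covE // G //.
  have solk : forall k : 'I_4, forall s, I s -> gam s 0 k =
      (gam s0 0 k * cos s0 - derive1 gam s0 0 k * sin s0) * cos s +
      (gam s0 0 k * sin s0 + derive1 gam s0 0 k * cos s0) * sin s.
    move=> k s Is.
    have dk : forall x, I x -> is_derive x 1 (fun y => gam y 0 k) (derive1 gam x 0 k).
      by move=> x Ix; exact: (@coord_is_derive R gam x k (dg x Ix)).
    have dk2 : forall x, I x -> is_derive x 1 (fun y => derive1 gam y 0 k) (- gam x 0 k).
      move=> x Ix; have := @coord_is_derive R (derive1 gam) x k (dT x Ix).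
      by rewrite AG // mxE.
    by have [h _] := @ode_sol R I _ _ s0 iI Is0 dk dk2 s Is.
  pose v := cos s0 *: gam s0 - sin s0 *: derive1 gam s0.
  pose w := sin s0 *: gam s0 + cos s0 *: derive1 gam s0.
  have gg := sph s0 Is0; have tt := unit s0 Is0; have gt := F1 s0 Is0.
  have tg : dot4 (derive1 gam s0) (gam s0) = 0 by rewrite dot4C.
  exists v, w; split.
  - rewrite /v ?(dot4Dl, dot4Bl, dot4Zl, dot4Dr, dot4Br, dot4Zr, dot4Nl, dot4Nr).
    rewrite gg tt gt tg; transitivity (cos s0 ^+ 2 + sin s0 ^+ 2); [ring | exact: e0].
  - rewrite /w ?(dot4Dl, dot4Bl, dot4Zl, dot4Dr, dot4Br, dot4Zr, dot4Nl, dot4Nr).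
    rewrite gg tt gt tg; transitivity (cos s0 ^+ 2 + sin s0 ^+ 2); [ring | exact: e0].
  - rewrite /v /w ?(dot4Dl, dot4Bl, dot4Zl, dot4Dr, dot4Br, dot4Zr, dot4Nl, dot4Nr).
    rewrite gg tt gt tg; ring.
  - have C0 : cross (gam s0) (confV a (gam s0)) (derive1 gam s0) = 0.
      have := trajE s0 Is0; rewrite -covE // G // => /esym /eqP.
      by rewrite scaler_eq0 (negPf q0) /= => /eqP.
    have sp := @span_alg R _ _ a gg tt gt C0.
    exists (f s0 * cos s0 - psi s0 * sin s0), (f s0 * sin s0 + psi s0 * cos s0).
    rewrite {1}sp; apply/rowP => k; rewrite !mxE /f /psi.
    rewrite -[LHS]mul1r -{1}e0; ring.
  - move=> s Is; apply/rowP => k; rewrite !mxE solk //; ring.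
move=> [s1 [Is1 nz]].
set a1 := f s0 * cos s0 - psi s0 * sin s0.
set a2 := f s0 * sin s0 + psi s0 * cos s0.
set Xc := dot4 a a - (a1 ^+ 2 + a2 ^+ 2).
have CC : forall x, I x ->
    dot4 (cross (gam x) (confV a (gam x)) (derive1 gam x))
         (cross (gam x) (confV a (gam x)) (derive1 gam x)) = Xc.
  move=> x Ix; rewrite curv_alg ?sph ?unit ?F1 //.
  have [h1 h2] := sol x Ix; rewrite /f /psi in h1 h2; rewrite h1 h2.
  have ex := cos2Dsin2 x.
  rewrite /Xc; exact: sq_id.
have Xc_ge0 : 0 <= Xc by rewrite -(CC s0 Is0) dot4_ge0.
have Xc_gt0 : 0 < Xc.
  rewrite lt_def Xc_ge0 andbT; apply/eqP => X0.
  move: nz; rewrite traj //.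
  have := CC s1 Is1; rewrite X0 => /dot4_eq0 ->.
  by rewrite scaler0 eqxx.
set K := `|q| * Num.sqrt Xc.
have K0 : K != 0.
  by rewrite /K mulf_neq0 ?normr_eq0 // gt_eqF // sqrtr_gt0.
have KK : K ^+ 2 = q ^+ 2 * Xc.
  by rewrite /K exprMn real_normK ?num_real // sqr_sqrtr.
have curvE : forall x, I x -> curvature gam x = K.
  move=> x Ix; rewrite /curvature /norm4 traj // dot4Zl dot4Zr CC //.
  by rewrite mulrA -expr2 sqrtrM ?sqr_ge0 // sqrtr_sqr.
move=> s Is; split; first exact: curvE.
pose A : R -> 'rV[R]_4 := derive1 (derive1 gam).
have AgE : forall x, (A + gam) x = A x + gam x by [].
have dAg : forall x, I x -> derivable (A + gam) x 1.
  by move=> x Ix; apply: derivableD; [exact: dA | exact: dg].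
have dAgE : forall x, I x -> derive1 (A + gam) x = derive1 A x + derive1 gam x.
  by move=> x Ix; rewrite !derive1E deriveD //; [exact: dA | exact: dg].
have nI : \forall x \near s, I x by exact: oI.
have nE : \forall x \near s, normal gam x = K^-1 *: (A + gam) x.
  by apply: filterS nI => x Ix; rewrite /normal curvE // covE.
have dN : derive1 (normal gam) s = K^-1 *: (derive1 A s + derive1 gam s).
  rewrite derive1E (near_eq_derive (1 : R) nE).
  have := deriveZ (K^-1) (dAg s Is) => ->.
  by rewrite -derive1E dAgE.
have nS : normal gam s = K^-1 *: (A s + gam s) by rewrite /normal curvE // covE.
have hAgg : forall x, I x -> dot4 ((A + gam) x) (gam x) = 0.
  by move=> x Ix; rewrite AgE dot4Dl [dot4 (A x) _]dot4C F3 // sph //; lra.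
have hAgt : forall x, I x -> dot4 ((A + gam) x) (derive1 gam x) = 0.
  by move=> x Ix; rewrite AgE dot4Dl [dot4 (A x) _]dot4C F2 // F1 //; lra.
have hAgAg : forall x, I x -> dot4 ((A + gam) x) ((A + gam) x) = K ^+ 2.
  by move=> x Ix; rewrite AgE trajE // dot4Zl dot4Zr CC // KK mulrA -expr2.
have hAga : forall x, I x -> dot4 ((A + gam) x) a = 0.
  by move=> x Ix; rewrite AgE F4.
set Nd := derive1 A s + derive1 gam s.
have hNdg : dot4 Nd (gam s) = 0.
  have := deriv_on_const oI Is hAgg (dot4_is_derive (dAg s Is) (dg s Is)).
  by rewrite dAgE // hAgt // addr0.
have hNdAg : dot4 Nd (A s + gam s) = 0.
  have := deriv_on_const oI Is hAgAg (dot4_is_derive (dAg s Is) (dAg s Is)).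
  rewrite dAgE // AgE [dot4 (A s + gam s) _]dot4C.
  by move/eqP; rewrite -mulr2n mulrn_eq0 /= => /eqP.
have hNdt : dot4 Nd (derive1 gam s) = - K ^+ 2.
  have := deriv_on_const oI Is hAgt (dot4_is_derive (dAg s Is) (dT s Is)).
  rewrite dAgE // AgE.
  have : dot4 (A s + gam s) (A s) = K ^+ 2.
    have := hAgAg s Is; rewrite AgE !dot4Dr.
    by have := hAgg s Is; rewrite AgE => ->; rewrite addr0.
  rewrite /A => -> /eqP; rewrite addr_eq0 => /eqP.
  by [].
have hNda : dot4 Nd a = 0.
  have := deriv_on_const oI Is hAga
    (@dot4_is_derive R (A + gam) (cst a) s (dAg s Is) (derivable_cst a s 1)).
  by rewrite dAgE // derive1_cst dot40r addr0.
have T := @torsion_alg R (gam s) (derive1 gam s) (A s + gam s) Nd a q K (psi s) q0 K0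
  (sph s Is) (unit s Is) (F1 s Is) (hAgg s Is) (hAgt s Is) (hAgAg s Is) (trajE s Is)
  hNdg hNdAg hNdt hNda erefl.
rewrite /torsion /covD dN /binormal nS /tangent T.
have [_ h2] := sol s Is; rewrite h2.
rewrite -/a1 -/a2; ring.
Qed.
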